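(* Fix a client $D_j$ and let the random variables $Z_1,\dots,Z_{k/\epsilon}$ be as described in the context. Then for every $\ell\in[k]$, every $t\in[\ell-1]$ and every $r\in\{(\ell-1)/\epsilon+1,\dots,\ell/\epsilon\}$, $$H_r(t-1):=\Pr\Big[\sum_{r'=1}^{r-1}Z_{r'}\le t-1 \;\Big|\; Z_r=1\Big]\;\le\; e^{-r\epsilon}\left(\frac{e\, r\,\epsilon}{t}\right)^t.$$
   Context: Instance: clients $D_1,\dots,D_n$, facilities $F_1,\dots,F_m$, nonnegative costs $c_{i,j}$, integer $k\le m$, harmonic weights $w_\ell=1/\ell$ ($\ell\in[k]$). Consider the linear program: minimize $\sum_{j=1}^n\sum_{\ell=1}^k\sum_{i=1}^m w_\ell x^\ell_{ij}c_{ij}$ subject to $\sum_{i=1}^m y_i=k$; $\sum_{\ell=1}^k x^\ell_{ij}\le y_i$ for all $i\in[m],j\in[n]$; $\sum_{i=1}^m x^\ell_{ij}\ge 1$ for all $j\in[n],\ell\in[k]$; $y_i,x^\ell_{ij}\in[0,1]$. Let $(x^*,y^* )$ be an optimal (rational) solution. Dependent rounding (DR) with a fixed tournament tree: fix a rooted binary tree with $m$ leaves, leaf $i$ holding variable $y_i$ initialized to $y^*_i$; repeatedly take two nonempty sibling nodes whose parent is empty. If both hold fractional variables $y_a,y_b$ with $s=y_a+y_b$: if $s\le 1$, with probability $y_a/s$ set $(y_a,y_b)\leftarrow(s,0)$, otherwise $(0,s)$; if $s>1$, with probability $(1-y_b)/(2-s)$ set $(y_a,y_b)\leftarrow(1,s-1)$,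 otherwise $(s-1,1)$. A variable that is still fractional is promoted to the parent; if both became integral a dummy $\bot$ is promoted; if one node holds $\bot$ (or an already integral variable), the other node's content is promoted unchanged. At the end all variables are in $\{0,1\}$; let $Y_i$ be the final value of $y_i$. Now fix the client $D_j$ and renumber facilities so that $c_{1,j}\le c_{2,j}\le\dots\le c_{m,j}$ (ties broken arbitrarily but fixed). Fix $\epsilon>0$ such that $1/\epsilon$ and all $y^*_i/\epsilon$ are integers. Let $\mathrm{submax}(0)=0$, $\mathrm{submax}(i)=\mathrm{submax}(i-1)+y^*_i/\epsilon$, and $\mathrm{sub}(i)=\{\mathrm{submax}(i-1)+1,\dots,\mathrm{submax}(i)\}$, so $\{1,\dots,k/\epsilon\}$ is partitioned into the blocks $\mathrm{sub}(i)$. Define $Z_1,\dots,Z_{k/\epsilon}\in\{0,1\}$ as follows: for each $i$ with $Y_i=1$, independently of everything else choose one index $r\in\mathrm{sub}(i)$ uniformly at random and set $Z_r=1$; all other $Z_r$ are $0$. Thus $Y_i=\sum_{r\in\mathrm{sub}(i)}Z_r$ and $\Pr[Z_r=1]=\epsilon$ for all $r$. *)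

(* Defs.v *)
From HB Require Import structures.
From mathcomp Require Import all_boot all_order all_algebra all_fingroup.
From mathcomp Require Import reals sequences exp.
Set Implicit Arguments. Unset Strict Implicit. Unset Printing Implicit Defensive.
Import Order.TTheory GRing.Theory Num.Theory.
Local Open Scope ring_scope.

Section Defs.
Variable R : realType.

(** Finite discrete distributions: lists of (weight, outcome). *)
Definition dist (T : Type) := seq (R * T).
Definition dret (T : Type) (x : T) : dist T := [:: (1, x)].
Definition dbind (T U : Type) (d : dist T) (f : T -> dist U) : dist U :=
  flatten [seq [seq (p.1 * q.1, q.2) | q <- f p.2] | p <- d].
Definition prob (T : Type) (d : dist T) (P : T -> bool) : R :=
  \sum_(p <- d) (if P p.2 then p.1 else 0).
Definition condprob (T : Type) (d : dist T) (A B : T -> bool) : R :=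
  prob d (fun w => A w && B w) / prob d B.

(** The LP relaxation (facilities 'I_m, clients 'I_n, levels 'I_k,
    level l : 'I_k stands for ell = l+1, with weight 1/ell). *)
Definition lp_feasible (m n k : nat) (x : 'I_k -> 'I_m -> 'I_n -> R)
    (y : 'I_m -> R) : Prop :=
  [/\ \sum_(i < m) y i = k%:R,
      (forall i j, \sum_(l < k) x l i j <= y i),
      (forall j l, 1 <= \sum_(i < m) x l i j),
      (forall i, 0 <= y i <= 1) &
      (forall l i j, 0 <= x l i j <= 1)].

Definition lp_obj (m n k : nat) (c : 'I_m -> 'I_n -> R)
    (x : 'I_k -> 'I_m -> 'I_n -> R) : R :=
  \sum_(j < n) \sum_(l < k) \sum_(i < m) ((l.+1)%:R)^-1 * x l i j * c i j.

Definition lp_optimal (m n k : nat) (c : 'I_m -> 'I_n -> R)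
    (x : 'I_k -> 'I_m -> 'I_n -> R) (y : 'I_m -> R) : Prop :=
  lp_feasible x y /\
  forall (x' : 'I_k -> 'I_m -> 'I_n -> R) (y' : 'I_m -> R), lp_feasible x' y' -> lp_obj c x <= lp_obj c x'.

(** Dependent rounding with a fixed tournament tree. *)
Inductive btree (m : nat) : Type :=
  | BLeaf of 'I_m
  | BNode of btree m & btree m.

Fixpoint leaves (m : nat) (T : btree m) : seq 'I_m :=
  match T with
  | BLeaf i => [:: i]
  | BNode l r => leaves l ++ leaves r
  end.

Definition frac (v : R) : bool := (0 < v) && (v < 1).

(* a node content: Some a = the fractional variable y_a; None = bot
   (or an already integral variable, which behaves the same way) *)
Definition promote (m : nat) (y : 'I_m -> R) (a b : 'I_m) : option 'I_m :=
  if frac (y a) then Some a else if frac (y b) then Some b else None.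

Definition upd2 (m : nat) (y : 'I_m -> R) (a : 'I_m) (va : R) (b : 'I_m) (vb : R)
  : 'I_m -> R :=
  fun i => if i == a then va else if i == b then vb else y i.

Definition dr_merge (m : nat) (y : 'I_m -> R) (ca cb : option 'I_m)
  : dist (('I_m -> R) * option 'I_m) :=
  match ca, cb with
  | Some a, Some b =>
      let s := y a + y b in
      if s <= 1 then
        let y1 := upd2 y a s b 0 in
        let y2 := upd2 y a 0 b s in
        [:: (y a / s, (y1, promote y1 a b)); (1 - y a / s, (y2, promote y2 a b))]
      else
        let y1 := upd2 y a 1 b (s - 1) in
        let y2 := upd2 y a (s - 1) b 1 in
        [:: ((1 - y b) / (2 - s), (y1, promote y1 a b));
            (1 - (1 - y b) / (2 - s), (y2, promote y2 a b))]
  | Some a, None => dret (y, Some a)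
  | None, Some b => dret (y, Some b)
  | None, None => dret (y, None)
  end.

(* Subtrees act on disjoint variables with independent randomness, so
   processing the left subtree, then the right one, then merging at the
   root yields the distribution of the DR process. *)
Fixpoint dr (m : nat) (T : btree m) (y : 'I_m -> R)
  : dist (('I_m -> R) * option 'I_m) :=
  match T with
  | BLeaf i => dret (y, if frac (y i) then Some i else None)
  | BNode l r =>
      dbind (dr l y) (fun p =>
      dbind (dr r p.1) (fun q => dr_merge q.1 p.2 q.2))
  end.

(** Blocks sub(i) for client ordering sigma (position p holds facility
    sigma p, 0-based), with y*_i / eps = nn i. Indices r are 1-based. *)
Definition sub_block (m : nat) (sigma : {perm 'I_m}) (nn : 'I_m -> nat)
    (i : 'I_m) : seq nat :=
  iota (\sum_(q < m | (q < (sigma^-1)%g i)%N) nn (sigma q)).+1 (nn i).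

(** Distribution of the set of indices r with Z_r = 1, given final Y:
    for each i with Y_i = 1, an independent uniform r in sub(i). *)
Definition zdist (m : nat) (sigma : {perm 'I_m}) (nn : 'I_m -> nat)
    (Y : 'I_m -> R) : dist (seq nat) :=
  foldr (fun i d =>
           if Y i == 1 then
             dbind d (fun s => [seq (((nn i)%:R)^-1, r :: s) | r <- sub_block sigma nn i])
           else d)
        (dret [::]) (enum 'I_m).

Definition Zdist (m : nat) (T : btree m) (ystar : 'I_m -> R)
    (sigma : {perm 'I_m}) (nn : 'I_m -> nat) : dist (seq nat) :=
  dbind (dr T ystar) (fun p => zdist sigma nn p.1).

Definition Zv (r : nat) (s : seq nat) : nat := (r \in s).

End Defs.

(* Main.v *)
Require Import Defs.
From HB Require Import structures.
From mathcomp Require Import all_boot all_order all_algebra all_fingroup.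
From mathcomp Require Import reals sequences exp.
From mathcomp Require Import ring lra zify.
Import Order.TTheory GRing.Theory Num.Theory.
Local Open Scope ring_scope.
Set Implicit Arguments. Unset Strict Implicit. Unset Printing Implicit Defensive.

Fixpoint dall (T : Type) (P : T -> Prop) (s : seq T) : Prop :=
  match s with [::] => True | x :: s' => P x /\ dall P s' end.

Lemma dall_cat T (P : T -> Prop) s1 s2 : dall P (s1 ++ s2) <-> dall P s1 /\ dall P s2.
Proof. elim: s1 => [|x s1 IH] /=; first by tauto. rewrite IH; tauto. Qed.

Lemma dall_map T U (f : T -> U) (P : U -> Prop) s :
  dall P (map f s) <-> dall (fun x => P (f x)) s.
Proof. elim: s => [|x s IH] /=; first by tauto. rewrite IH; tauto. Qed.

Lemma dall_imp T (P Q : T -> Prop) s : (forall x, P x -> Q x) -> dall P s -> dall Q s.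
Proof. move=> H; elim: s => [|x s IH] //= [] /H ? /IH; tauto. Qed.

Lemma dall_and T (P Q : T -> Prop) s : dall P s -> dall Q s -> dall (fun x => P x /\ Q x) s.
Proof. elim: s => [|x s IH] //= [] ? ? [] ? ?; split => //; exact: IH. Qed.

Lemma dall_all T (P : T -> Prop) s : (forall x, P x) -> dall P s.
Proof. move=> H; elim: s => //= x s ->; split => //. Qed.

Section Dist.
Variable R : realType.

Definition Ex (T : Type) (d : dist R T) (f : T -> R) : R := \sum_(p <- d) p.1 * f p.2.

Lemma dall_bind T U (d : dist R T) (f : T -> dist R U) (P : R * U -> Prop) :
  dall (fun p => dall (fun q => P (p.1 * q.1, q.2)) (f p.2)) d -> dall P (dbind d f).
Proof.
elim: d => [|p d IH] //= [] H1 H2; rewrite /dbind /= dall_cat; split; last exact: IH.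
by rewrite dall_map.
Qed.

Lemma Ex_bind T U (d : dist R T) (f : T -> dist R U) g :
  Ex (dbind d f) g = Ex d (fun x => Ex (f x) g).
Proof.
rewrite /Ex /dbind big_flatten big_map; apply: eq_bigr => p _.
rewrite big_map mulr_sumr; apply: eq_bigr => q _ /=; by rewrite mulrA.
Qed.

Lemma Ex_le T (d : dist R T) f g :
  dall (fun p => 0 <= p.1 /\ f p.2 <= g p.2) d -> Ex d f <= Ex d g.
Proof.
rewrite /Ex; elim: d => [|p d IH] /=; first by rewrite !big_nil.
move=> [] [] H0 H1 H2; rewrite !big_cons; apply: lerD; last exact: IH.
exact: ler_wpM2l.
Qed.

Lemma ExZ T (d : dist R T) f a : Ex d (fun x => a * f x) = a * Ex d f.
Proof. rewrite /Ex mulr_sumr; apply: eq_bigr => p _; by rewrite mulrCA. Qed.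

Lemma ExB T (d : dist R T) f g : Ex d (fun x => f x - g x) = Ex d f - Ex d g.
Proof. rewrite /Ex -sumrB; apply: eq_bigr => p _; by rewrite mulrBr. Qed.

Lemma Ex_ext T (d : dist R T) f g : (forall x, f x = g x) -> Ex d f = Ex d g.
Proof. move=> H; rewrite /Ex; apply: eq_bigr => p _; by rewrite H. Qed.

Lemma probE T (d : dist R T) P : prob d P = Ex d (fun x => (P x)%:R).
Proof. rewrite /prob /Ex; apply: eq_bigr => p _; case: (P p.2); by rewrite ?mulr1 ?mulr0. Qed.

Lemma Ex_ret T (x : T) f : Ex (dret R x) f = f x.
Proof. by rewrite /Ex /dret big_cons big_nil mul1r addr0. Qed.

End Dist.

Section TwoPoint.
Variable R : realType.

Definition TP (x y : R) (f : R -> R -> R) : R :=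
  if x + y <= 1 then x / (x + y) * f (x + y) 0 + (1 - x / (x + y)) * f 0 (x + y)
  else (1 - y) / (2 - (x + y)) * f 1 (x + y - 1)
       + (1 - (1 - y) / (2 - (x + y))) * f (x + y - 1) 1.

Definition Lf (w v : R) := 1 - w * v.
Definition psi (w v : R) := v * (1 - w * v) / (1 - w).
Definition Hf (w v : R) := if psi w v <= 1 then psi w v else 1.

Lemma TP_sym x y f : 0 < x -> 0 < y -> x < 1 -> y < 1 ->
  TP x y f = TP y x (fun u v => f v u).
Proof.
move=> x0 y0 x1 y1; rewrite /TP [y + x]addrC; case: ifP => _.
  have s0 : x + y != 0 by rewrite gt_eqF // addr_gt0.
  have -> : 1 - x / (x + y) = y / (x + y) by field.
  have -> : 1 - y / (x + y) = x / (x + y) by field.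
  exact: addrC.
have s0 : 2 - (x + y) != 0 by apply/eqP => h; lra.
have -> : 1 - (1 - y) / (2 - (x + y)) = (1 - x) / (2 - (x + y)) by field.
have -> : 1 - (1 - x) / (2 - (x + y)) = (1 - y) / (2 - (x + y)) by field.
exact: addrC.
Qed.

Lemma TP_le x y f (B : R) : 0 < x -> 0 < y -> x < 1 -> y < 1 ->
  (forall p, 0 <= p <= 1 -> p * (x + y) = x -> x + y <= 1 ->
     p * f (x + y) 0 + (1 - p) * f 0 (x + y) <= B) ->
  (forall p, 0 <= p <= 1 -> p * (2 - (x + y)) = 1 - y -> 1 < x + y ->
     p * f 1 (x + y - 1) + (1 - p) * f (x + y - 1) 1 <= B) ->
  TP x y f <= B.
Proof.
move=> x0 y0 x1 y1 H1 H2; rewrite /TP; case: ifP => hs.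
  have s0 : 0 < x + y by lra.
  apply: H1 => //; last by rewrite mulfVK ?gt_eqF.
  apply/andP; split; first by apply: divr_ge0; lra.
  by rewrite ler_pdivrMr // mul1r; lra.
have hs' : 1 < x + y by rewrite ltNge hs.
have s0 : 0 < 2 - (x + y) by lra.
apply: H2 => //; last by rewrite mulfVK ?gt_eqF.
apply/andP; split; first by apply: divr_ge0; lra.
by rewrite ler_pdivrMr // mul1r; lra.
Qed.

Lemma TP_ge x y f (B : R) : 0 < x -> 0 < y -> x < 1 -> y < 1 ->
  (forall p, 0 <= p <= 1 -> p * (x + y) = x -> x + y <= 1 ->
     B <= p * f (x + y) 0 + (1 - p) * f 0 (x + y)) ->
  (forall p, 0 <= p <= 1 -> p * (2 - (x + y)) = 1 - y -> 1 < x + y ->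
     B <= p * f 1 (x + y - 1) + (1 - p) * f (x + y - 1) 1) ->
  B <= TP x y f.
Proof.
move=> x0 y0 x1 y1 H1 H2; rewrite /TP; case: ifP => hs.
  have s0 : 0 < x + y by lra.
  apply: H1 => //; last by rewrite mulfVK ?gt_eqF.
  apply/andP; split; first by apply: divr_ge0; lra.
  by rewrite ler_pdivrMr // mul1r; lra.
have hs' : 1 < x + y by rewrite ltNge hs.
have s0 : 0 < 2 - (x + y) by lra.
apply: H2 => //; last by rewrite mulfVK ?gt_eqF.
apply/andP; split; first by apply: divr_ge0; lra.
by rewrite ler_pdivrMr // mul1r; lra.
Qed.

Lemma TP_11 x y : 0 < x -> 0 < y -> x < 1 -> y < 1 -> TP x y (fun _ _ => 1) <= 1.
Proof. move=> *; apply: TP_le => // p *; lra. Qed.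

Lemma TP_1L w x y : 0 < x -> 0 < y -> x < 1 -> y < 1 ->
  TP x y (fun _ v => Lf w v) <= Lf w y.
Proof.
move=> *; apply: TP_le => // p _ hp _; rewrite /Lf;
  have e := congr1 (fun z => w * z) hp; simpl in e; lra.
Qed.

Lemma TP_1L_ge w x y : 0 < x -> 0 < y -> x < 1 -> y < 1 ->
  Lf w y <= TP x y (fun _ v => Lf w v).
Proof.
move=> *; apply: TP_ge => // p _ hp _; rewrite /Lf;
  have e := congr1 (fun z => w * z) hp; simpl in e; lra.
Qed.

Lemma TP_LL w x y : 0 <= w <= 1 -> 0 < x -> 0 < y -> x < 1 -> y < 1 ->
  TP x y (fun u v => Lf w u * Lf w v) <= Lf w x * Lf w y.
Proof.
move=> hw *; apply: TP_le => // p *; rewrite /Lf.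
  have : 0 <= w * w * x * y by rewrite !mulr_ge0 //; lra. nra.
have : 0 <= w * w * (1 - x) * (1 - y) by rewrite !mulr_ge0 //; lra. nra.
Qed.

Ltac pos := (repeat first [apply: sqr_ge0 | apply: mulr_ge0]); lra.

Section HH.
Variable w : R.
Hypothesis w0 : 0 <= w.
Hypothesis w1 : w < 1.

Lemma psiq v : psi w v * (1 - w) = v * (1 - w * v).
Proof. have W0 := w0; have W1 := w1. rewrite /psi mulfVK // gt_eqF //. lra. Qed.

Lemma Hf_le1 v : Hf w v <= 1.
Proof. have W0 := w0; have W1 := w1. rewrite /Hf; case: ifP => //. Qed.
Lemma Hf_lepsi v : Hf w v <= psi w v.
Proof. have W0 := w0; have W1 := w1. rewrite /Hf; case: ifP => // /negbT; rewrite -ltNge; exact: ltW. Qed.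
Lemma Hf0 : Hf w 0 = 0.
Proof. have W0 := w0; have W1 := w1. by rewrite /Hf /psi !mul0r ler01. Qed.
Lemma Hf1 : Hf w 1 = 1.
Proof. have W0 := w0; have W1 := w1. rewrite /Hf /psi mul1r mulr1 divff ?lexx // gt_eqF //; lra. Qed.
Lemma Hf_ge0 v : 0 <= v <= 1 -> 0 <= Hf w v.
Proof. have W0 := w0; have W1 := w1.
move=> /andP[v0 v1]; rewrite /Hf; case: ifP => // _.
rewrite /psi divr_ge0 ?mulr_ge0 //; nra.
Qed.

Lemma poly2 (p u : R) : 0 <= p <= 1 ->
  p * (1 - w) + (1 - p) * (u * (1 - w * u)) <=
  (p + (1 - p) * u) * (1 - w * (p + (1 - p) * u)).
Proof. have W0 := w0; have W1 := w1.
move=> /andP[p0 p1].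
have : 0 <= w * (p * (1 - p)) * (1 - u) ^+ 2 by pos.
lra.
Qed.

Lemma poly1 (p x y : R) : 0 < x -> 0 < y -> x < 1 -> y < 1 ->
  p * (2 - (x + y)) = 1 - y ->
  p * (1 - w * (x + y - 1)) * (1 - w) + (1 - p) * ((x + y - 1) * (1 - w * (x + y - 1))) * (1 - w)
  <= x * (1 - w * x) * (1 - w * y).
Proof. have W0 := w0; have W1 := w1.
move=> x0 y0 x1 y1 hp.
have ex : x = p + (1 - p) * (x + y - 1) by lra.
have -> : p * (1 - w * (x + y - 1)) * (1 - w) + (1 - p) * ((x + y - 1) * (1 - w * (x + y - 1))) * (1 - w)
  = (1 - w) * (1 - w * (x + y - 1)) * (p + (1 - p) * (x + y - 1)) by ring.
rewrite -ex.
have : 0 <= x * (w * w * ((1 - x) * (1 - y))).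
  by pos.
lra.
Qed.

Lemma TP_H1 x y : 0 < x -> 0 < y -> x < 1 -> y < 1 ->
  TP x y (fun u _ => Hf w u) <= Hf w x.
Proof. have W0 := w0; have W1 := w1.
move=> x0 y0 x1 y1; have hq : 0 < 1 - w by lra.
have H1s := Hf_le1; have Hps := Hf_lepsi; have Hp := psiq.
rewrite {2}/Hf; case: ifP => hx.
  apply: TP_le => // p /andP[p0 p1] hp hs.
    rewrite Hf0 mulr0 addr0 -(ler_pM2r hq) Hp.
    have A : p * Hf w (x + y) * (1 - w) <= p * ((x + y) * (1 - w * (x + y))).
      by rewrite -mulrA ler_wpM2l // -Hp ler_wpM2r // ltW.
    have C : p * ((x + y) * (1 - w * (x + y))) = x * (1 - w * (x + y)) by rewrite mulrA hp.
    have : 0 <= w * x * y by pos.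
    lra.
  rewrite Hf1 mulr1 -(ler_pM2r hq) Hp.
  have A : (1 - p) * Hf w (x + y - 1) * (1 - w) <= (1 - p) * ((x + y - 1) * (1 - w * (x + y - 1))).
    by rewrite -mulrA ler_wpM2l ?subr_ge0 // -Hp ler_wpM2r // ltW.
  have ex : x = p + (1 - p) * (x + y - 1) by lra.
  have pp : 0 <= p <= 1 by rewrite p0 p1.
  have := poly2 (x + y - 1) pp; rewrite -ex.
  lra.
apply: TP_le => // p /andP[p0 p1] hp hs.
  rewrite Hf0 mulr0 addr0; have := H1s (x + y); have := @Hf_ge0 (x + y); nra.
rewrite Hf1; have := H1s (x + y - 1); nra.
Qed.

Lemma TP_HL x y : 0 < x -> 0 < y -> x < 1 -> y < 1 ->
  TP x y (fun u v => Hf w u * Lf w v) <= Hf w x * Lf w y.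
Proof. have W0 := w0; have W1 := w1.
move=> x0 y0 x1 y1; have hq : 0 < 1 - w by lra.
have H1s := Hf_le1; have Hps := Hf_lepsi; have Hp := psiq.
rewrite {2}/Hf; case: ifP => hx.
  apply: TP_le => // p /andP[p0 p1] hp hs.
    rewrite Hf0 mul0r mulr0 addr0 /Lf mulr0 subr0 mulr1 -(ler_pM2r hq) [X in _ <= X]mulrAC Hp.
    have A : p * Hf w (x + y) * (1 - w) <= p * ((x + y) * (1 - w * (x + y))).
      by rewrite -mulrA ler_wpM2l // -Hp ler_wpM2r // ltW.
    have C : p * ((x + y) * (1 - w * (x + y))) = x * (1 - w * (x + y)) by rewrite mulrA hp.
    have : 0 <= w * w * x * x * y by pos.
    lra.
  rewrite Hf1 mul1r /Lf mulr1 -(ler_pM2r hq) [X in _ <= X]mulrAC Hp.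
  have A : (1 - p) * (Hf w (x + y - 1) * (1 - w)) * (1 - w) <=
      (1 - p) * ((x + y - 1) * (1 - w * (x + y - 1))) * (1 - w).
    apply: ler_wpM2r; first lra; apply: ler_wpM2l; first lra; rewrite -Hp; apply: ler_wpM2r; [lra | exact: Hps].
  have := poly1 x0 y0 x1 y1 hp.
  have -> : (p * (1 - w * (x + y - 1)) + (1 - p) * (Hf w (x + y - 1) * (1 - w))) * (1 - w)
     = p * (1 - w * (x + y - 1)) * (1 - w) + (1 - p) * (Hf w (x + y - 1) * (1 - w)) * (1 - w) by ring.
  lra.
apply: TP_le => // p /andP[p0 p1] hp hs.
  rewrite Hf0 mul0r mulr0 addr0 /Lf mulr0 subr0 mulr1 mul1r.
  have s0 : 0 < x + y by lra.
  have hp1 : p <= 1 - w * y.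
    rewrite -(ler_pM2r s0) hp.
    have : 0 <= y * (1 - w * (x + y)) by apply: mulr_ge0; nra.
    lra.
  have := H1s (x + y); have := @Hf_ge0 (x + y); nra.
rewrite Hf1 mul1r /Lf mulr1 mul1r; have := H1s (x + y - 1).
move=> hH.
have h : Hf w (x + y - 1) * (1 - w) <= 1 - w.
  by rewrite -[X in _ <= X]mul1r; apply: ler_wpM2r; lra.
have h2 : (1 - p) * (Hf w (x + y - 1) * (1 - w)) <= (1 - p) * (1 - w).
  by apply: ler_wpM2l; lra.
have e := congr1 (fun z => w * z) hp; simpl in e.
lra.
Qed.

End HH.
End TwoPoint.

Section DR.
Variable R : realType.
Variable m : nat.
Local Notation fr := (@Defs.frac R).
Implicit Types (y : 'I_m -> R).

Lemma upd2_a y a va b vb : upd2 y a va b vb a = va.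
Proof. by rewrite /upd2 eqxx. Qed.
Lemma upd2_b y a va b vb : a != b -> upd2 y a va b vb b = vb.
Proof. by rewrite /upd2 eq_sym => /negbTE ->; rewrite eqxx. Qed.
Lemma upd2_o y a va b vb j : j != a -> j != b -> upd2 y a va b vb j = y j.
Proof. by rewrite /upd2 => /negbTE -> /negbTE ->. Qed.

Lemma prod_upd2 (psi : 'I_m -> R -> R) y a b va vb : a != b ->
  \prod_j psi j (upd2 y a va b vb j) =
  psi a va * psi b vb * \prod_(j | (j != a) && (j != b)) psi j (y j).
Proof.
move=> ab; rewrite (bigD1 a) //= (bigD1 b) /=; last by rewrite eq_sym.
rewrite upd2_a upd2_b // mulrA; congr (_ * _).
by apply: eq_bigr => j /andP[ja jb]; rewrite upd2_o.
Qed.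

Lemma sum_upd2 y a b va vb : a != b ->
  \sum_j upd2 y a va b vb j = va + vb + \sum_(j | (j != a) && (j != b)) y j.
Proof.
move=> ab; rewrite (bigD1 a) //= (bigD1 b) /=; last by rewrite eq_sym.
rewrite upd2_a upd2_b // addrA; congr (_ + _).
by apply: eq_bigr => j /andP[ja jb]; rewrite upd2_o.
Qed.

Lemma sum_split2 y a b : a != b ->
  \sum_j y j = y a + y b + \sum_(j | (j != a) && (j != b)) y j.
Proof.
move=> ab; rewrite (bigD1 a) //= (bigD1 b) /=; last by rewrite eq_sym.
by rewrite addrA.
Qed.

Lemma prod_split2 (psi : 'I_m -> R -> R) y a b : a != b ->
  \prod_j psi j (y j) = psi a (y a) * psi b (y b) * \prod_(j | (j != a) && (j != b)) psi j (y j).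
Proof.
move=> ab; rewrite (bigD1 a) //= (bigD1 b) /=; last by rewrite eq_sym.
by rewrite mulrA.
Qed.

Lemma merge_Ex y a b (G : ('I_m -> R) -> R) :
  Ex (dr_merge y (Some a) (Some b)) (fun p => G p.1) =
  TP (y a) (y b) (fun va vb => G (upd2 y a va b vb)).
Proof. by rewrite /Ex /dr_merge /TP; case: ifP => _; rewrite !big_cons big_nil addr0. Qed.

Lemma TP_mulr x z (f : R -> R -> R) K : TP x z (fun u v => f u v * K) = TP x z f * K.
Proof. rewrite /TP; case: ifP => _; ring. Qed.

Lemma merge_shape y a b : fr (y a) -> fr (y b) ->
  dall (fun z => 0 <= z.1 /\ exists va vb, [/\ z.2.1 = upd2 y a va b vb,
       va + vb = y a + y b, 0 <= va <= 1, 0 <= vb <= 1 &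
       ~~ (fr va && fr vb) /\ z.2.2 = promote z.2.1 a b])
    (dr_merge y (Some a) (Some b)).
Proof.
rewrite /Defs.frac => /andP[a0 a1] /andP[b0 b1].
rewrite /dr_merge; case: ifP => hs /=.
  have s0 : 0 < y a + y b by lra.
  have p0 : 0 <= y a / (y a + y b) by apply: divr_ge0; lra.
  have p1 : y a / (y a + y b) <= 1 by rewrite ler_pdivrMr // mul1r; lra.
  split; [split; first exact: p0 | split; [split; first lra | by []]].
    exists (y a + y b), 0; split; [reflexivity | by rewrite addr0 | lra | lra |
      split; [by rewrite /Defs.frac ltxx andbF | reflexivity]].
  exists 0, (y a + y b); split; [reflexivity | by rewrite add0r | lra | lra |
    split; [by rewrite /Defs.frac ltxx | reflexivity]].
have hs' : 1 < y a + y b by rewrite ltNge hs.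
have s0 : 0 < 2 - (y a + y b) by lra.
have p0 : 0 <= (1 - y b) / (2 - (y a + y b)) by apply: divr_ge0; lra.
have p1 : (1 - y b) / (2 - (y a + y b)) <= 1 by rewrite ler_pdivrMr // mul1r; lra.
split; [split; first exact: p0 | split; [split; first lra | by []]].
  exists 1, (y a + y b - 1); split; [reflexivity | ring | lra | lra |
    split; [by rewrite /Defs.frac ltxx andbF | reflexivity]].
exists (y a + y b - 1), 1; split; [reflexivity | ring | lra | lra |
  split; [by rewrite /Defs.frac ltxx !andbF | reflexivity]].
Qed.

End DR.

Section DRinv.
Variable R : realType.
Variable m : nat.
Local Notation fr := (@Defs.frac R).
Implicit Types (y : 'I_m -> R).

Record Inv (L : seq 'I_m) y (w : R) (y' : 'I_m -> R) (c : option 'I_m) : Prop := {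
  iw : 0 <= w;
  iy : forall j, 0 <= y' j <= 1;
  iout : forall j, j \notin L -> y' j = y j;
  iint : forall j, ~~ fr (y j) -> y' j = y j;
  ic : forall a, c = Some a -> a \in L /\ fr (y' a);
  ileaf : forall j, j \in L -> c <> Some j -> ~~ fr (y' j);
  isum : \sum_j y' j = \sum_j y j }.

Lemma inv_leaf i y : (forall j, 0 <= y j <= 1) ->
  Inv [:: i] y 1 y (if fr (y i) then Some i else None).
Proof.
move=> hy; split => //.
- move=> a; case: ifP => // h [<-]; by rewrite mem_seq1 eqxx.
- move=> j; rewrite mem_seq1 => /eqP ->; case: ifP => // h.
Qed.

Lemma inv_merge (l r : seq 'I_m) y w1 y1 ca w2 y2 cb :
  uniq (l ++ r) -> Inv l y w1 y1 ca -> Inv r y1 w2 y2 cb ->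
  dall (fun z => Inv (l ++ r) y (w1 * (w2 * z.1)) z.2.1 z.2.2) (dr_merge y2 ca cb).
Proof.
rewrite cat_uniq => /and3P[ul dj ur] I1 I2.
have nr : forall j, j \in l -> j \notin r.
  by move=> j jl; apply/negP => jr; move/hasP: dj; apply; exists j.
have P1 : forall j, 0 <= y2 j <= 1 := iy I2.
have P2 : forall j, j \notin l ++ r -> y2 j = y j.
  move=> j; rewrite mem_cat negb_or => /andP[jl jr].
  by rewrite (iout I2 jr) (iout I1 jl).
have P3 : forall j, ~~ fr (y j) -> y2 j = y j.
  move=> j hj; have e1 := iint I1 hj.
  by rewrite (iint I2) e1 //.
have P4 : forall j, j \in l ++ r -> ca <> Some j -> cb <> Some j -> ~~ fr (y2 j).
  move=> j; rewrite mem_cat => /orP[jl|jr] h1 h2.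
    by rewrite (iout I2 (nr _ jl)); apply: (ileaf I1).
  exact: (ileaf I2).
have P5 : \sum_j y2 j = \sum_j y j by rewrite (isum I2) (isum I1).
have Ca : forall a, ca = Some a -> [/\ a \in l, a \notin r & fr (y2 a)].
  move=> a /(ic I1) [al fa]; split => //; first exact: nr.
  by rewrite (iout I2 (nr _ al)).
have Cb : forall b, cb = Some b -> b \in r /\ fr (y2 b) := ic I2.
have w12 : 0 <= w1 * w2 by rewrite mulr_ge0 // ?(iw I1) ?(iw I2).
have frint : forall j, fr (y2 j) -> fr (y j).
  move=> j fj; apply/negPn/negP => hj; move: fj; by rewrite (P3 _ hj) (negbTE hj).
destruct ca as [a|]; destruct cb as [b|]; rewrite /=.
- have [al ar fa] := Ca a erefl; have [br fb] := Cb b erefl.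
  have ab : a != b by apply/eqP => e; move: ar; rewrite e br.
  apply: dall_imp (merge_shape fa fb) => -[w3 [y3 cc]] /= [w30 [va [vb [e3 esum va01 vb01 [nf ec]]]]].
  subst y3 cc.
  split.
  + by rewrite mulrA mulr_ge0.
  + move=> j; case: (eqVneq j a) => [->|ja]; first by rewrite upd2_a.
    case: (eqVneq j b) => [->|jb]; first by rewrite upd2_b.
    by rewrite upd2_o.
  + move=> j jn; rewrite upd2_o ?P2 //.
      by apply: contraNneq jn => ->; rewrite mem_cat al.
    by apply: contraNneq jn => ->; rewrite mem_cat br orbT.
  + move=> j hj; rewrite upd2_o ?P3 //.
      by apply: contraNneq hj => ->; exact: frint.
    by apply: contraNneq hj => ->; exact: frint.
  + move=> a'; rewrite /promote upd2_a upd2_b //.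
    case: ifP => [fa' [<-]|_]; first by rewrite mem_cat al upd2_a.
    case: ifP => [fb' [<-]|//]; by rewrite mem_cat br orbT upd2_b.
  + move=> j jl; rewrite /promote upd2_a upd2_b //.
    case: (eqVneq j a) => [->|ja].
      by rewrite upd2_a; case: ifP => // _ /(_ erefl).
    case: (eqVneq j b) => [->|jb].
      rewrite upd2_b //; case: ifP => [fva _|_]; last by case: ifP => // _ /(_ erefl).
      by apply: contra nf => ->; rewrite fva.
    rewrite upd2_o // => _; apply: P4 => // -[e]; [by move: ja; rewrite e eqxx | by move: jb; rewrite e eqxx].
  + by rewrite sum_upd2 // esum -sum_split2.
- have [al ar fa] := Ca a erefl.
  split => //; split => //.
  + by rewrite mulr1.
  + move=> a' [<-]; by rewrite mem_cat al.
  + move=> j jl hc; apply: P4 => //.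
- have [br fb] := Cb b erefl.
  split => //; split => //.
  + by rewrite mulr1.
  + move=> a' [<-]; by rewrite mem_cat br orbT.
  + move=> j jl hc; apply: P4 => //.
- split => //; split => //.
  + by rewrite mulr1.
  + move=> j jl _; apply: P4 => //.
Qed.

Lemma dr_inv (T : btree m) y : uniq (leaves T) -> (forall j, 0 <= y j <= 1) ->
  dall (fun z => Inv (leaves T) y z.1 z.2.1 z.2.2) (dr T y).
Proof.
elim: T y => [i|l IHl r IHr] y /= u hy.
  by split => //; apply: inv_leaf.
have ul : uniq (leaves l) by move: u; rewrite cat_uniq => /and3P[].
have ur : uniq (leaves r) by move: u; rewrite cat_uniq => /and3P[].
apply: dall_bind; apply: dall_imp (IHl y ul hy) => -[w1 [y1 ca]] /= I1.
apply: dall_bind; apply: dall_imp (IHr y1 ur (iy I1)) => -[w2 [y2 cb]] /= I2.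
apply: dall_imp (inv_merge u I1 I2) => z; by rewrite mulrA.
Qed.

End DRinv.

Section Super.
Variable R : realType.
Variable m : nat.
Local Notation fr := (@Defs.frac R).
Implicit Types (y : 'I_m -> R).

Lemma merge_mass y ca cb : Ex (dr_merge y ca cb) (fun _ => 1) = 1.
Proof.
case: ca => [a|]; case: cb => [b|]; rewrite /Ex /dr_merge /=;
  try case: ifP => _; rewrite ?big_cons ?big_nil /=; ring.
Qed.

Lemma dr_mass (T : btree m) y : Ex (dr T y) (fun _ => 1) = 1.
Proof.
elim: T y => [i|l IHl r IHr] y /=; first by rewrite Ex_ret.
rewrite Ex_bind -[RHS](IHl y); apply: Ex_ext => p.
rewrite Ex_bind -[RHS](IHr p.1); apply: Ex_ext => q.
exact: merge_mass.
Qed.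

Lemma eq_TP (x z : R) (f g : R -> R -> R) : (forall u v, f u v = g u v) ->
  TP x z f = TP x z g.
Proof. by move=> H; rewrite /TP !H. Qed.

Variable psi : 'I_m -> R -> R.
Hypothesis psi0 : forall j v, 0 <= v <= 1 -> 0 <= psi j v.
Hypothesis step : forall a b, a != b -> forall x z, fr x -> fr z ->
  TP x z (fun u v => psi a u * psi b v) <= psi a x * psi b z.

Definition PF y := \prod_j psi j (y j).

Lemma merge_super y ca cb : (forall j, 0 <= y j <= 1) ->
  (forall a, ca = Some a -> fr (y a)) -> (forall b, cb = Some b -> fr (y b)) ->
  (forall a b, ca = Some a -> cb = Some b -> a != b) ->
  Ex (dr_merge y ca cb) (fun p => PF p.1) <= PF y.
Proof.
move=> hy ha hb hab.
case: ca ha hab => [a|] ha hab; case: cb hb hab => [b|] hb hab;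
  rewrite /dr_merge ?Ex_ret //.
have ab := hab a b erefl erefl.
rewrite -/(dr_merge y (Some a) (Some b)) merge_Ex /PF.
rewrite (@eq_TP (y a) (y b) _ (fun u v => psi a u * psi b v *
   \prod_(j | (j != a) && (j != b)) psi j (y j))); last first.
  by move=> u v; rewrite prod_upd2.
rewrite TP_mulr (prod_split2 _ _ ab) ler_wpM2r //.
  by apply: prodr_ge0 => j _; apply: psi0.
by apply: step => //; [apply: ha | apply: hb].
Qed.

Lemma dr_super (T : btree m) y : uniq (leaves T) -> (forall j, 0 <= y j <= 1) ->
  Ex (dr T y) (fun p => PF p.1) <= PF y.
Proof.
elim: T y => [i|l IHl r IHr] y /= u hy; first by rewrite Ex_ret.
have ul : uniq (leaves l) by move: u; rewrite cat_uniq => /and3P[].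
have ur : uniq (leaves r) by move: u; rewrite cat_uniq => /and3P[].
have nr : forall j, j \in leaves l -> j \notin leaves r.
  move: u; rewrite cat_uniq => /and3P[_ dj _] j jl.
  by apply/negP => jr; move/hasP: dj; apply; exists j.
rewrite Ex_bind; apply: le_trans (IHl y ul hy).
apply: Ex_le; apply: dall_imp (dr_inv ul hy) => -[w1 [y1 ca]] /= I1.
split; first exact: (iw I1).
rewrite Ex_bind; apply: le_trans (IHr y1 ur (iy I1)).
apply: Ex_le; apply: dall_imp (dr_inv ur (iy I1)) => -[w2 [y2 cb]] /= I2.
split; first exact: (iw I2).
apply: merge_super; first exact: (iy I2).
- move=> a /(ic I1) [al fa]; by rewrite (iout I2 (nr _ al)).
- by move=> b /(ic I2) [].
- move=> a b /(ic I1) [al _] /(ic I2) [br _]; apply/eqP => e.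
  by move: (nr _ al); rewrite e br.
Qed.

End Super.

Section Root.
Variable R : realType.
Variable m : nat.
Local Notation fr := (@Defs.frac R).
Implicit Types (y : 'I_m -> R).

Lemma nfr01 (v : R) : 0 <= v <= 1 -> ~~ fr v -> v = (v == 1)%:R.
Proof.
move=> /andP[v0 v1]; rewrite /Defs.frac negb_and -!leNgt => /orP[h|h].
  have -> : v = 0 by apply/eqP; rewrite eq_le h v0.
  by rewrite eq_sym oner_eq0.
have -> : v = 1 by apply/eqP; rewrite eq_le h v1.
by rewrite eqxx.
Qed.

Lemma root_integral (T : btree m) y (k : nat) :
  perm_eq (leaves T) (enum 'I_m) -> (forall j, 0 <= y j <= 1) ->
  \sum_j y j = k%:R ->
  dall (fun z => [/\ 0 <= z.1, (forall j, 0 <= z.2.1 j <= 1),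
     (forall j, z.2.1 j = (z.2.1 j == 1)%:R) &
     (forall j, y j = 0 -> z.2.1 j = 0)]) (dr T y).
Proof.
move=> pe hy hs.
have u : uniq (leaves T) by rewrite (perm_uniq pe) enum_uniq.
have inT : forall j, j \in leaves T by move=> j; rewrite (perm_mem pe) mem_enum.
apply: dall_imp (dr_inv u hy) => -[w [y' c]] /= I.
have hc : c = None.
  case: c I => // a I; exfalso.
  have [_ fa] := ic I erefl.
  have hsum := isum I; rewrite hs (bigD1 a) //= in hsum.
  have e : \sum_(j | j != a) y' j = (\sum_(j | j != a) nat_of_bool (y' j == 1%R))%:R.
    rewrite natr_sum; apply: eq_bigr => j ja; apply: nfr01; first exact: (iy I j).
    by apply: (ileaf I (inT j)) => -[e]; move: ja; rewrite e eqxx.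
  rewrite e in hsum; move: fa; rewrite /Defs.frac.
  set n := (\sum_(j | j != a) _)%N in hsum *.
  have -> : y' a = k%:R - n%:R by rewrite -hsum addrK.
  case: (leqP n k) => hnk.
    rewrite -natrB // ltr0n ltrn1 => /andP[h1 h2].
    by move: h2; rewrite ltnS leqn0 => /eqP h2; rewrite h2 in h1.
  move=> /andP[h1 _]; move: h1; rewrite subr_gt0 ltr_nat => h1.
  by move: (ltn_trans h1 hnk); rewrite ltnn.
subst c; split.
- exact: iw I.
- exact: iy I.
- move=> j; apply: nfr01; first exact: (iy I j).
  exact: (ileaf I (inT j)).
- move=> j yj; rewrite (iint I) //; by rewrite yj /Defs.frac ltxx.
Qed.

End Root.

Lemma dall_mem (T : eqType) (P : T -> Prop) (s : seq T) :
  (forall x, x \in s -> P x) -> dall P s.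
Proof.
elim: s => [|x s IH] //= H; split; first by apply: H; rewrite mem_head.
by apply: IH => z zs; apply: H; rewrite in_cons zs orbT.
Qed.

Section Blocks.
Variable m : nat.
Variable sigma : {perm 'I_m}.
Variable nn : 'I_m -> nat.

Definition st (p : nat) : nat := \sum_(q < m | (q < p)%N) nn (sigma q).
Definition pos (a : 'I_m) : nat := (sigma^-1)%g a.
Local Notation sub := (sub_block sigma nn).

Lemma mem_sub a x : (x \in sub a) = (st (pos a) < x <= st (pos a) + nn a)%N.
Proof. by rewrite /sub_block mem_iota addSn ltnS. Qed.

Lemma st_lt a p : (pos a < p)%N -> (st (pos a) + nn a <= st p)%N.
Proof.
move=> h; rewrite /st [X in (_ <= X)%N](bigD1 ((sigma^-1)%g a)) //= permKV addnC leq_add2l.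
rewrite [X in (X <= _)%N]big_mkcond [X in (_ <= X)%N]big_mkcond /=.
apply: leq_sum => q _; case: ifP => // hq; rewrite ifT //; apply/andP; split.
  exact: ltn_trans hq h.
by apply: contraTneq hq => ->; rewrite ltnn.
Qed.

Lemma pos_inj a b : pos a = pos b -> a = b.
Proof. by move=> /val_inj /perm_inj. Qed.

Lemma sub_disj a b x : a != b -> x \in sub a -> x \in sub b -> False.
Proof.
move=> ab; rewrite !mem_sub => /andP[a1 a2] /andP[b1 b2].
case: (ltngtP (pos a) (pos b)) => h.
- have := st_lt h; lia.
- have := st_lt h; lia.
- by move: ab; rewrite (pos_inj h) eqxx.
Qed.

Lemma sum_le1 (P Q : pred 'I_m) :
  (forall a b, P a -> P b -> Q a -> Q b -> a = b) ->
  (\sum_(a | P a) (Q a : nat) <= 1)%N.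
Proof.
move=> H; case: (pickP (fun a => P a && Q a)) => [a0 /andP[Pa0 Qa0]|none].
  rewrite (bigD1 a0) //= Qa0 big1 // => b /andP[Pb nb].
  apply/eqP; rewrite eqb0; apply/negP => Qb.
  by move: nb; rewrite (H _ _ Pb Pa0 Qb Qa0) eqxx.
rewrite big1 // => b Pb; by have := none b; rewrite Pb /= => ->.
Qed.

Lemma single_le (F : nat -> nat) x r : (1 <= x < r)%N ->
  (F x <= \sum_(1 <= r' < r) F r')%N.
Proof.
move=> /andP[x1 xr]; rewrite (big_cat_nat (n := x)) //=; last exact: ltnW.
by rewrite [X in (_ <= _ + X)%N]big_ltn // addnCA leq_addr.
Qed.

Lemma cnt_ge (P : pred 'I_m) (s : seq nat) r :
  (forall a, P a -> exists2 x, x \in s & (x \in sub a) && (1 <= x < r)%N) ->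
  (\sum_(a | P a) 1 <= \sum_(1 <= r' < r) Zv r' s)%N.
Proof.
move=> H.
apply: (@leq_trans (\sum_(a | P a) \sum_(1 <= r' < r) nat_of_bool ((r' \in s) && (r' \in sub a)))).
  apply: leq_sum => a Pa; have [x xs /andP[xa xr]] := H a Pa.
  apply: leq_trans (single_le (fun r' => nat_of_bool ((r' \in s) && (r' \in sub a))) xr).
  by rewrite xs xa.
rewrite exchange_big /=; apply: leq_sum => r' _; rewrite /Zv.
case: (boolP (r' \in s)) => rs /=; last by rewrite big1.
apply: sum_le1 => a b _ _ ra rb; apply/eqP/negPn/negP => ab.
exact: sub_disj ab ra rb.
Qed.

End Blocks.

Section Z.
Variable R : realType.
Variable m : nat.
Variable sigma : {perm 'I_m}.
Variable nn : 'I_m -> nat.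
Variable Y : 'I_m -> R.
Local Notation sub := (sub_block sigma nn).

Definition D (L : seq 'I_m) : dist R (seq nat) :=
  foldr (fun i d =>
           if Y i == 1 then
             dbind d (fun s => [seq (((nn i)%:R)^-1, r :: s) | r <- sub i])
           else d)
        (dret R [::]) L.

Lemma zdistE : zdist sigma nn Y = D (enum 'I_m). Proof. by []. Qed.

Lemma D_supp L : dall (fun z => 0 <= z.1 /\
   (forall x, x \in z.2 -> exists a, [/\ a \in L, Y a == 1 & x \in sub a]) /\
   (forall a, a \in L -> Y a == 1 -> exists2 x, x \in z.2 & x \in sub a)) (D L).
Proof.
elim: L => [|i L IH] /=.
  by split => //; split => //; split => //.
case: ifP => hi.
  apply: dall_bind; apply: dall_imp IH => -[w s] /= [w0 [H1 H2]].
  rewrite dall_map; apply: dall_mem => r ri /=; split.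
    by rewrite mulr_ge0 // invr_ge0.
  split.
    move=> x; rewrite in_cons => /orP[/eqP ->|xs].
      by exists i; rewrite mem_head.
    have [a [aL ya xa]] := H1 x xs; exists a; by rewrite in_cons aL orbT.
  move=> a; rewrite in_cons => /orP[/eqP ->|aL] ya.
    by exists r => //; rewrite mem_head.
  have [x xs xa] := H2 a aL ya; exists x => //; by rewrite in_cons xs orbT.
apply: dall_imp IH => -[w s] /= [w0 [H1 H2]]; split => //; split.
  move=> x /H1 [a [aL ya xa]]; exists a; by rewrite in_cons aL orbT.
move=> a; rewrite in_cons => /orP[/eqP ->|aL] ya; first by rewrite hi in ya.
exact: H2.
Qed.

Hypothesis hpos : forall a, Y a == 1 -> (0 < nn a)%N.

Lemma sum_seq_const (T : Type) (s : seq T) (c : R) : \sum_(r <- s) c = (size s)%:R * c.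
Proof.
elim: s => [|x s IH]; first by rewrite big_nil mul0r.
by rewrite big_cons IH /= -nat1r mulrDl mul1r.
Qed.

Lemma D_mass L : Ex (D L) (fun _ => 1) = 1.
Proof.
elim: L => [|i L IH] /=; first by rewrite Ex_ret.
case: ifP => hi //.
rewrite Ex_bind -[RHS]IH; apply: Ex_ext => s.
rewrite /Ex big_map /= (eq_bigr (fun _ => ((nn i)%:R)^-1)); last by move=> r _; rewrite mulr1.
rewrite sum_seq_const size_iota mulfV //.
by rewrite pnatr_eq0 -lt0n hpos.
Qed.

Lemma Ex_ext_dall (T : Type) (d : dist R T) f g :
  dall (fun p => f p.2 = g p.2) d -> Ex d f = Ex d g.
Proof.
rewrite /Ex; elim: d => [|p d IH] /=; first by rewrite !big_nil.
by move=> [e H]; rewrite !big_cons e IH.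
Qed.

Lemma ExD (T : Type) (d : dist R T) f g : Ex d (fun x => f x + g x) = Ex d f + Ex d g.
Proof. by rewrite /Ex -big_split; apply: eq_bigr => p _; rewrite mulrDr. Qed.

Lemma sum_eq_count (s : seq nat) x : \sum_(r <- s) ((x == r)%:R : R) = (count_mem x s)%:R.
Proof.
elim: s => [|r t IH]; first by rewrite big_nil.
by rewrite big_cons /= IH natrD eq_sym.
Qed.

Lemma D_mem L x : uniq L ->
  Ex (D L) (fun s => (x \in s)%:R) =
  \sum_(a <- L) (Y a == 1)%:R * (x \in sub a)%:R / (nn a)%:R.
Proof.
elim: L => [|i L IH] /=; first by rewrite Ex_ret big_nil.
move=> /andP[iL uL]; rewrite big_cons; case: ifP => hi; last by rewrite IH // mul0r mul0r add0r.
have n0 : (nn i)%:R != 0 :> R by rewrite pnatr_eq0 -lt0n hpos.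
rewrite Ex_bind (@Ex_ext_dall _ _ _ (fun s => ((nn i)%:R^-1 * (x \in sub i)%:R) * 1 + (x \in s)%:R)).
  by rewrite ExD ExZ D_mass IH // mul1r mulr1 mulrC.
apply: dall_imp (D_supp L) => -[w s] /= [_ [H1 _]].
rewrite /Ex big_map /=.
have e : forall r, r \in sub i -> ((x \in r :: s)%:R : R) = (x == r)%:R + (x \in s)%:R.
  move=> r ri; rewrite in_cons; case: (eqVneq x r) => [xr|] /=; last by rewrite add0r.
  case: (boolP (x \in s)) => xs; last by rewrite addr0.
  have [a [aL _ xa]] := H1 x xs; exfalso.
  have ai : a != i by apply: contraNneq iL => <-.
  by apply: (sub_disj ai xa); rewrite xr.
rewrite (eq_big_seq (fun r => (nn i)%:R^-1 * (x == r)%:R + (nn i)%:R^-1 * (x \in s)%:R));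
  last by move=> r ri; rewrite e // mulrDr.
have e1 : \sum_(r <- sub i) ((x == r)%:R : R) = (x \in sub i)%:R.
  by rewrite sum_eq_count count_uniq_mem // iota_uniq.
rewrite big_split /= -!mulr_sumr e1 sum_seq_const size_iota mulrA mulVf //.
by rewrite mul1r !mulr1.
Qed.

End Z.

Section Kind.
Variable R : realType.
Local Notation fr := (@Defs.frac R).

Inductive kind := K1 | KL | KH.
Definition kf (w : R) (k : kind) (v : R) : R :=
  match k with K1 => 1 | KL => Lf w v | KH => Hf w v end.

Definition isKH (k : kind) : bool := if k is KH then true else false.

Lemma kf_ge0 w k v : 0 <= w < 1 -> 0 <= v <= 1 -> 0 <= kf w k v.
Proof.
move=> /andP[w0 w1] /andP[v0 v1]; case: k => /=; rewrite ?ler01 //.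
  rewrite /Lf; nra.
by apply: Hf_ge0 => //; rewrite v0 v1.
Qed.

Lemma TP_kind w ka kb x z : 0 <= w < 1 -> ~~ (isKH ka && isKH kb) ->
  fr x -> fr z ->
  TP x z (fun u v => kf w ka u * kf w kb v) <= kf w ka x * kf w kb z.
Proof.
move=> /andP[w0 w1] nhh /andP[x0 x1] /andP[z0 z1].
have wle : 0 <= w <= 1 by rewrite w0 ltW.
have sym : forall f, TP x z f = TP z x (fun u v => f v u) by move=> f; apply: TP_sym.
case: ka nhh => [] /=; case: kb => //= _.
- rewrite (@eq_TP _ x z _ (fun _ _ => 1)); last by move=> u v; rewrite mulr1.
  rewrite mulr1; exact: TP_11.
- rewrite (@eq_TP _ x z _ (fun _ v => Lf w v)); last by move=> u v; rewrite mul1r.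
  rewrite mul1r; exact: TP_1L.
- rewrite (@eq_TP _ x z _ (fun _ v => Hf w v)); last by move=> u v; rewrite mul1r.
  rewrite mul1r sym; exact: TP_H1.
- rewrite (@eq_TP _ x z _ (fun u _ => Lf w u)); last by move=> u v; rewrite mulr1.
  rewrite mulr1 sym; exact: TP_1L.
- exact: TP_LL.
- rewrite sym (@eq_TP _ z x _ (fun u v => Hf w u * Lf w v)); last by move=> u v; rewrite mulrC.
  rewrite mulrC; exact: TP_HL.
- rewrite (@eq_TP _ x z _ (fun u _ => Hf w u)); last by move=> u v; rewrite mulr1.
  rewrite mulr1; exact: TP_H1.
- exact: TP_HL.
Qed.

Lemma target_mono (t : nat) (x mu : R) : (0 < t)%N -> t%:R <= x -> x <= mu ->
  expR (- mu) * (expR 1 * mu / t%:R) ^+ t <= expR (- x) * (expR 1 * x / t%:R) ^+ t.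
Proof.
move=> t0 tx xmu.
have x0 : 0 < x by apply: lt_le_trans tx; rewrite ltr0n.
have -> : expR 1 * mu / t%:R = (expR 1 * x / t%:R) * (mu / x).
  by field; rewrite ?gt_eqF // ltr0n.
rewrite exprMn mulrCA [X in _ <= X]mulrC; apply: ler_wpM2l.
  by apply: exprn_ge0; apply: divr_ge0; [apply: mulr_ge0; [apply: expR_ge0 | lra] | apply: ler0n].
have h1 : (mu / x) ^+ t <= expR (mu / x - 1) ^+ t.
  apply: lerXn2r; rewrite ?nnegrE ?expR_ge0 //; first by apply: divr_ge0; lra.
  by have := expR_ge1Dx (mu / x - 1); rewrite addrCA subrr addr0.
rewrite -expRM_natl in h1.
have h2 : t%:R * (mu / x - 1) <= mu - x.
  have -> : t%:R * (mu / x - 1) = t%:R * (mu - x) / x by field; rewrite gt_eqF.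
  rewrite ler_pdivrMr //; nra.
apply: le_trans (ler_wpM2l (expR_ge0 _) h1) _.
rewrite -expRD ler_expR; lra.
Qed.

Lemma final_ineq (t : nat) (y0 mu x q w : R) : (0 < t)%N -> 0 < y0 -> y0 <= 1 ->
  t%:R < x -> x <= mu -> q = t%:R / mu -> w = 1 - q ->
  Hf w y0 * expR (- (w * (mu - y0))) <=
  q ^+ t.-1 * y0 * (expR (- x) * (expR 1 * x / t%:R) ^+ t).
Proof.
move=> t0 y00 y01 tx xmu qE wE.
have t0' : 0 < t%:R :> R by rewrite ltr0n.
have mu0 : 0 < mu by lra.
have q0 : 0 < q by rewrite qE divr_gt0.
have q1 : q < 1 by rewrite qE ltr_pdivrMr // mul1r; lra.
have w0 : 0 <= w by lra.
have w1 : w < 1 by lra.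
apply: (le_trans _ (ler_wpM2l (mulr_ge0 (ltW (exprn_gt0 t.-1 q0)) (ltW y00)) (target_mono t0 (ltW tx) xmu))).
(* LHS <= y0 / q * expR (- mu) * expR 1 ^+ t *)
have hH : Hf w y0 <= y0 * (1 - w * y0) / q.
  by apply: le_trans (Hf_lepsi w0 w1 y0) _; rewrite /psi wE; have -> : 1 - (1 - q) = q by ring.
have hE : (1 - w * y0) * expR (w * y0) <= 1.
  have := expR_ge1Dx (- (w * y0)).
  move=> h; have := ler_wpM2r (expR_ge0 (w * y0)) h.
  by rewrite -expRD addNr expR0.
have eexp : expR (- (w * (mu - y0))) = expR (- mu) * expR 1 ^+ t * expR (w * y0).
  rewrite -expRM_natl mulr1 -!expRD; congr expR.
  rewrite wE qE; field; rewrite gt_eqF //.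
rewrite eexp.
have Hge0 : 0 <= Hf w y0 by apply: Hf_ge0 => //; rewrite (ltW y00) y01.
apply: le_trans (ler_wpM2r (mulr_ge0 (mulr_ge0 (expR_ge0 _) (exprn_ge0 _ (expR_ge0 _))) (expR_ge0 _)) hH) _.
have -> : y0 * (1 - w * y0) / q * (expR (- mu) * expR 1 ^+ t * expR (w * y0)) =
   y0 / q * expR (- mu) * expR 1 ^+ t * ((1 - w * y0) * expR (w * y0)) by field; rewrite gt_eqF //.
have -> : q ^+ t.-1 * y0 * (expR (- mu) * (expR 1 * mu / t%:R) ^+ t) =
   y0 / q * expR (- mu) * expR 1 ^+ t.
  have -> : expR 1 * mu / t%:R = expR 1 / q.
    by rewrite qE; field; rewrite !gt_eqF.
  have eq : q ^+ t = q ^+ t.-1 * q by rewrite -exprSr prednK.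
  rewrite expr_div_n eq; field.
  by rewrite !gt_eqF // exprn_gt0.
rewrite -[X in _ <= X]mulr1; apply: ler_wpM2l => //.
apply: mulr_ge0; [apply: mulr_ge0; [apply: divr_ge0; lra | apply: expR_ge0] |].
exact: exprn_ge0 (expR_ge0 _).
Qed.

End Kind.

Lemma exists_block (f : nat -> nat) n r : (f 0 < r)%N -> (r <= f n)%N ->
  exists p, (p < n)%N /\ (f p < r <= f p.+1)%N.
Proof.
elim: n => [|n IH] h0 hn; first lia.
case: (leqP r (f n)) => h.
  have [p [pn hp]] := IH h0 h; exists p; split => //; lia.
by exists n; split => //; rewrite h hn.
Qed.

Section Blocks2.
Variable m : nat.
Variable sigma : {perm 'I_m}.
Variable nn : 'I_m -> nat.

Lemma pos_sigma x : pos sigma (sigma x) = x.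
Proof. by rewrite /pos permK. Qed.

Lemma st0 : st sigma nn 0 = 0%N.
Proof. by rewrite /st big1. Qed.

Lemma st_S p (hp : (p < m)%N) : st sigma nn p.+1 = (st sigma nn p + nn (sigma (Ordinal hp)))%N.
Proof.
rewrite /st (bigD1 (Ordinal hp)) /= ?ltnSn // addnC; congr (_ + _)%N.
apply: eq_bigl => q; rewrite ltnS ltn_neqAle andbC; congr (_ && _).
Qed.

Lemma sum_pos p : (\sum_(a | (pos sigma a < p)%N) nn a)%N = st sigma nn p.
Proof.
rewrite /st (reindex_inj (@perm_inj _ sigma)) /=.
by apply: eq_bigl => q; rewrite pos_sigma.
Qed.

Lemma st_m : st sigma nn m = (\sum_a nn a)%N.
Proof.
by rewrite -sum_pos; apply: eq_bigl => a; rewrite /pos ltn_ord.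
Qed.

End Blocks2.

Unset Implicit Arguments.
Set Strict Implicit.

Theorem lemma1 (R : realType) (n m k : nat)
    (c : 'I_m -> 'I_n -> R) (xstar : 'I_k -> 'I_m -> 'I_n -> R)
    (ystar : 'I_m -> R) (T : btree m) (j : 'I_n) (sigma : {perm 'I_m})
    (N : nat) (nn : 'I_m -> nat) :
  (forall i j', 0 <= c i j') ->
  (k <= m)%N ->
  lp_optimal c xstar ystar ->
  perm_eq (leaves T) (enum 'I_m) ->
  (forall p q : 'I_m, (p <= q)%N -> c (sigma p) j <= c (sigma q) j) ->
  (0 < N)%N ->
  (forall i, ystar i = (nn i)%:R / N%:R) ->
  forall (ell t r : nat),
    (1 <= ell <= k)%N -> (1 <= t <= ell - 1)%N ->
    ((ell - 1) * N + 1 <= r <= ell * N)%N ->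
    condprob (Zdist T ystar sigma nn)
      (fun s => (\sum_(1 <= r' < r) Zv r' s <= t - 1)%N)
      (fun s => Zv r s == 1%N)
    <= expR (- (r%:R / N%:R)) * (expR 1 * (r%:R / N%:R) / t%:R) ^+ t.
Proof.
move=> _ _ [[hsum _ _ hy01 _] _] pe _ N0 hyE ell t r /andP[e1 ek] /andP[t1 tl] /andP[r1 r2].
have N0' : 0 < N%:R :> R by rewrite ltr0n.
have hnn : (\sum_i nn i)%N = (k * N)%N.
  apply/eqP; rewrite -(eqr_nat R) natr_sum natrM -hsum mulr_suml; apply/eqP.
  by apply: eq_bigr => i _; rewrite hyE divfK // gt_eqF.
have [p [pm /andP[hp1 hp2]]] : exists p, (p < m)%N /\ (st sigma nn p < r <= st sigma nn p.+1)%N.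
  apply: exists_block; first by rewrite st0; lia.
  rewrite st_m hnn; apply: leq_trans r2 _; rewrite leq_mul2r; lia.
set i0 := sigma (Ordinal pm).
have pi0 : pos sigma i0 = p by rewrite pos_sigma.
rewrite (st_S sigma nn pm) -/i0 in hp2.
have ri0 : r \in sub_block sigma nn i0 by rewrite mem_sub pi0 hp1 hp2.
have nI0 : (0 < nn i0)%N by lia.
set nI : R := (nn i0)%:R.
have nI0' : 0 < nI by rewrite ltr0n.
set y0 := ystar i0.
have y00 : 0 < y0 by rewrite /y0 hyE divr_gt0.
have y01 : y0 <= 1 by have /andP[] := hy01 i0.
set mu : R := (st sigma nn p + nn i0)%:R / N%:R.
set x : R := r%:R / N%:R.
have tx : t%:R < x.
  rewrite /x ltr_pdivlMr // -natrM ltr_nat.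
  apply: leq_trans r1; rewrite addn1 ltnS leq_mul2r; lia.
have xmu : x <= mu by rewrite /x /mu ler_pM2r ?invr_gt0 // ler_nat.
set q : R := t%:R / mu.
set w : R := 1 - q.
have t0' : 0 < t%:R :> R by rewrite ltr0n.
have mu0 : 0 < mu by lra.
have q0 : 0 < q by rewrite /q divr_gt0.
have q1 : q < 1 by rewrite /q ltr_pdivrMr // mul1r; lra.
have w0 : 0 <= w by rewrite /w; lra.
have w1 : w < 1 by rewrite /w; lra.
have w01 : 0 <= w < 1 by rewrite w0 w1.
have uT : uniq (leaves T) by rewrite (perm_uniq pe) enum_uniq.
set Sb : pred 'I_m := fun a => (pos sigma a < p)%N.
have Si0 : ~~ Sb i0 by rewrite /Sb /= pi0 ltnn.
set kM := fun a : 'I_m => if a == i0 then KH else if Sb a then KL else K1.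
set kB := fun a : 'I_m => if a == i0 then KL else K1.
have nKH : forall a, isKH (kM a) = (a == i0).
  by move=> a; rewrite /kM; case: (a == i0) => //; case: (Sb a).
have stepM : forall a b, a != b -> forall x z, Defs.frac x -> Defs.frac z ->
    TP x z (fun u v => kf w (kM a) u * kf w (kM b) v) <= kf w (kM a) x * kf w (kM b) z.
  move=> a b ab x' z' fx fz; apply: TP_kind => //.
  rewrite !nKH; apply/negP => /andP[/eqP ea /eqP eb]; by move: ab; rewrite ea eb eqxx.
have stepB : forall a b, a != b -> forall x z, Defs.frac x -> Defs.frac z ->
    TP x z (fun u v => kf w (kB a) u * kf w (kB b) v) <= kf w (kB a) x * kf w (kB b) z.
  move=> a b ab x' z' fx fz; apply: TP_kind => //.
  by rewrite /kB; case: (a == i0); case: (b == i0).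
have psi0M : forall j v, 0 <= v <= 1 -> 0 <= kf w (kM j) v.
  by move=> j' v h; apply: kf_ge0.
have psi0B : forall j v, 0 <= v <= 1 -> 0 <= kf w (kB j) v.
  by move=> j' v h; apply: kf_ge0.
have superM := dr_super psi0M stepM uT hy01.
have superB := dr_super psi0B stepB uT hy01.
have RI := root_integral pe hy01 hsum.
have mass := dr_mass T ystar.
set XS := fun Y : 'I_m -> R => (\sum_(a | Sb a && (Y a == 1%R)) 1)%N.
set Q : R := q ^+ t.-1.
have Q0 : 0 < Q by rewrite /Q exprn_gt0.
have hposY : forall Y : 'I_m -> R, (forall a, ystar a = 0 -> Y a = 0) ->
    forall a, Y a == 1 -> (0 < nn a)%N.
  move=> Y Y0 a /eqP ya; rewrite lt0n; apply/negP => /eqP na.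
  have := Y0 a; rewrite hyE na mul0r => /(_ erefl); rewrite ya => /eqP.
  by rewrite oner_eq0.
have PBY : forall Y : 'I_m -> R, forall hp : (forall a, Y a == 1 -> (0 < nn a)%N),
    Ex (D sigma nn Y (enum 'I_m)) (fun s => (r \in s)%:R) = (Y i0 == 1)%:R / nI.
  move=> Y hpY; rewrite (D_mem sigma hpY r (enum_uniq _)) big_enum /= (bigD1 i0) //= ri0.
  rewrite big1 ?addr0 ?mulr1 // => a ai.
  have -> : (r \in sub_block sigma nn a) = false.
    by apply/negP => ra; exact: (sub_disj ai ra ri0).
  by rewrite mulr0 mul0r.
have ABY : forall Y : 'I_m -> R, forall hp : (forall a, Y a == 1 -> (0 < nn a)%N),
    Ex (D sigma nn Y (enum 'I_m))
      (fun s => (((\sum_(1 <= r' < r) Zv r' s <= t - 1)%N) && (Zv r s == 1%N))%:R)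
    <= (Y i0 == 1)%:R * (XS Y <= t - 1)%N%:R * ((Y i0 == 1)%:R / nI).
  move=> Y hpY; rewrite -(PBY Y hpY) -ExZ; apply: Ex_le.
  apply: dall_imp (D_supp sigma nn Y (enum 'I_m)) => -[w' s] /= [w'0 [H1 H2]].
  split => //.
  case: (boolP (_ && _)) => [/andP[hA hB]|_]; last by rewrite !mulr_ge0 ?ler0n.
  have rs : r \in s by move: hB; rewrite /Zv; case: (r \in s).
  have [a [_ ya ra]] := H1 r rs.
  have ea : a = i0 by apply/eqP/negPn/negP => ai; exact: (sub_disj ai ra ri0).
  rewrite -ea ya rs.
  have -> : (XS Y <= t - 1)%N.
    apply: leq_trans hA; apply: (cnt_ge (sigma := sigma) (nn := nn)) => b /andP[sb yb].
    have [z zs zb] := H2 b (mem_enum _ b) yb.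
    exists z => //; rewrite zb /=.
    move: zb; rewrite mem_sub => /andP[z1 z2]; apply/andP; split.
      exact: leq_ltn_trans (leq0n _) z1.
    exact: leq_ltn_trans (leq_trans z2 (st_lt nn sb)) hp1.
  by rewrite !mulr1.
have PFY : forall Y : 'I_m -> R, (forall a, 0 <= Y a <= 1) -> (forall a, Y a = (Y a == 1)%:R) ->
    (Y i0 == 1)%:R * (XS Y <= t - 1)%N%:R * Q <= PF (fun a => kf w (kM a)) Y.
  move=> Y Y01 Yint.
  have PF0 : 0 <= PF (fun a => kf w (kM a)) Y by apply: prodr_ge0 => a _; apply: psi0M.
  case: (eqVneq (Y i0) 1) => hY; last by rewrite mul0r mul0r.
  have ePF : PF (fun a => kf w (kM a)) Y = q ^+ (XS Y).
    rewrite /PF (eq_bigr (fun a => if Sb a && (Y a == 1) then q else 1)).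
      by rewrite -big_mkcond prodr_const /XS sum1_card.
    move=> a _; rewrite /kM; case: (eqVneq a i0) => [->|ai] /=.
      by rewrite (negbTE Si0) hY Hf1.
    case: (Sb a) => //=; rewrite /Lf; case: (eqVneq (Y a) 1) => [->|ya1] /=.
      by rewrite mulr1 /w opprB addrC subrK.
    by rewrite Yint (negbTE ya1) mulr0 subr0.
  rewrite ePF ?eqxx /= ?mul1r; case: (leqP (XS Y) (t - 1)) => h; last by rewrite mul0r exprn_ge0 // ltW.
  rewrite mul1r /Q; apply: ler_wiXn2l; [exact: ltW | exact: ltW | by rewrite -subn1].
have PFb : forall Y : 'I_m -> R, PF (fun a => kf w (kB a)) Y = 1 - w * Y i0.
  move=> Y; rewrite /PF (bigD1 i0) //= /kB eqxx big1 ?mulr1 // => a /negbTE -> //.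
have wpos : 0 < w by rewrite /w; lra.
have Ege : y0 <= Ex (dr T ystar) (fun z => z.1 i0).
  have h := superB; rewrite PFb (Ex_ext _ (fun z => PFb z.1)) ExB ExZ mass in h.
  by rewrite /y0 -(ler_pM2l wpos); lra.
set target := expR (- (r%:R / N%:R)) * (expR 1 * (r%:R / N%:R) / t%:R) ^+ t.
have tg0 : 0 <= target.
  rewrite /target; apply: mulr_ge0; first exact: expR_ge0.
  apply: exprn_ge0; apply: divr_ge0; last exact: ler0n.
  by apply: mulr_ge0; [exact: expR_ge0 | rewrite divr_ge0].
have PFbound : PF (fun a => kf w (kM a)) ystar <= Q * y0 * target.
  have ePF : PF (fun a => kf w (kM a)) ystar = Hf w y0 * \prod_(a | Sb a) Lf w (ystar a).
    rewrite /PF (bigD1 i0) //= /kM eqxx /=; congr (_ * _).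
    rewrite big_mkcond [RHS]big_mkcond; apply: eq_bigr => a _ /=.
    case: (eqVneq a i0) => [->|ai] /=; first by rewrite (negbTE Si0).
    by case: (Sb a).
  have hS : \sum_(a | Sb a) ystar a = mu - y0.
    rewrite (eq_bigr (fun a => (nn a)%:R / N%:R)); last by move=> a _; rewrite hyE.
    rewrite -mulr_suml -natr_sum (_ : (\sum_(a | Sb a) nn a)%N = st sigma nn p); last exact: sum_pos.
    by rewrite /mu /y0 hyE natrD; field; rewrite gt_eqF.
  have hprod : \prod_(a | Sb a) Lf w (ystar a) <= expR (- (w * (mu - y0))).
    rewrite -hS mulr_sumr -sumrN expR_sum; apply: ler_prod => a _; apply/andP; split.
      rewrite /Lf subr_ge0; have /andP[_ ya1] := hy01 a.
      by apply: le_trans (ler_wpM2l w0 ya1) _; rewrite mulr1 ltW.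
    by have := expR_ge1Dx (- (w * ystar a)).
  have Hge : 0 <= Hf w y0 by apply: Hf_ge0 => //; rewrite (ltW y00) y01.
  rewrite ePF; apply: le_trans (ler_wpM2l Hge hprod) _.
  exact: (final_ineq t1 y00 y01 tx xmu (erefl q) (erefl w)).
rewrite -/target /condprob /Zdist !probE !Ex_bind.
have eB : forall s, ((Zv r s == 1%N)%:R : R) = (r \in s)%:R.
  by move=> s; rewrite /Zv; case: (r \in s).
have PBe : Ex (dr T ystar) (fun z => Ex (zdist sigma nn z.1) (fun s => (Zv r s == 1%N)%:R))
    = nI^-1 * Ex (dr T ystar) (fun z => z.1 i0).
  rewrite -ExZ; apply: Ex_ext_dall; apply: dall_imp RI => -[w' [Y c']] /= [_ Y01 Yint Y0].
  rewrite zdistE (Ex_ext _ eB) (PBY Y (hposY Y Y0)) [in RHS](Yint i0).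
  by rewrite mulrC.
have PABle : Ex (dr T ystar) (fun z => Ex (zdist sigma nn z.1)
      (fun s => (((\sum_(1 <= r' < r) Zv r' s <= t - 1)%N) && (Zv r s == 1%N))%:R))
    <= (Q * nI)^-1 * PF (fun a => kf w (kM a)) ystar.
  apply: (@le_trans _ _ (Ex (dr T ystar) (fun z => (Q * nI)^-1 * PF (fun a => kf w (kM a)) z.1))).
    apply: Ex_le; apply: dall_imp RI => -[w' [Y c']] /= [w'0 Y01 Yint Y0]; split => //.
    rewrite zdistE; apply: le_trans (ABY Y (hposY Y Y0)) _.
    set b : R := (Y i0 == 1)%:R; set cc : R := (XS Y <= t - 1)%N%:R.
    have bb : b * b = b by rewrite /b; case: (Y i0 == 1); rewrite ?mulr1 ?mulr0.
    have -> : b * cc * (b / nI) = (b * b) * cc / nI by ring.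
    rewrite bb.
    have -> : b * cc / nI = (Q * nI)^-1 * (b * cc * Q) by field; rewrite !gt_eqF.
    apply: ler_wpM2l; first by rewrite invr_ge0 mulr_ge0 // ltW.
    exact: PFY.
  rewrite ExZ; apply: ler_wpM2l; first by rewrite invr_ge0 mulr_ge0 // ltW.
  exact: superM.
rewrite PBe.
have E0 : 0 < Ex (dr T ystar) (fun z => z.1 i0) by lra.
rewrite ler_pdivrMr; last by rewrite mulr_gt0 // invr_gt0.
apply: le_trans PABle _.
apply: (@le_trans _ _ ((Q * nI)^-1 * (Q * y0 * target))).
  by apply: ler_wpM2l => //; rewrite invr_ge0 mulr_ge0 // ltW.
have -> : (Q * nI)^-1 * (Q * y0 * target) = target * (nI^-1 * y0) by field; rewrite !gt_eqF.
apply: ler_wpM2l => //; apply: ler_wpM2l => //; by rewrite invr_ge0 ltW.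
Qed.
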